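(* Let $S$ be a numerical semigroup with $\mathrm{g}(S)=g\ge 1$ and $\mathrm{m}(S)=a$. Let $q=\lfloor g/a\rfloor$ and $r=g-aq$. Then $S$ is reflective if and only if $a\in\{2,3,\dots,g+1\}$, $a\nmid g$, and \[ S=\langle A\rangle \quad\text{for}\quad A=\{a,\ 2g+a-r\}\cup\{g+1,g+2,\dots,g+(a-1)\}. \]
   Context: A numerical semigroup is a submonoid $S$ of $(\mathbb{N}_0,+)$ with finite complement. Its set of gaps is $\mathrm{H}(S)=\mathbb{N}_0\setminus S$, its genus is $\mathrm{g}(S)=\#\mathrm{H}(S)$, its Frobenius number (when $\mathrm{g}(S)\ge1$) is $\mathrm{F}(S)=\max \mathrm{H}(S)$, and its multiplicity $\mathrm{m}(S)$ is the smallest positive element of $S$. For $A\subseteq\mathbb{N}_0$, $\langle A\rangle$ denotes the set of all finite $\mathbb{N}_0$-linear combinations of elements of $A$. A numerical semigroup $S$ of genus $g\ge1$ is called reflective if for every $z\in\{0,1,\dots,g-1\}$ exactly one of $z$ and $z+g$ belongs to $S$. *)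

(* Defs.v *)
From mathcomp Require Import all_boot.
Set Implicit Arguments. Unset Strict Implicit. Unset Printing Implicit Defensive.

Definition numerical_semigroup (S : pred nat) : Prop :=
  [/\ S 0,
      (forall x y, S x -> S y -> S (x + y)) &
      exists N, forall n, N <= n -> S n].

Definition has_genus (S : pred nat) (g : nat) : Prop :=
  exists N, (forall n, N <= n -> S n) /\ count (fun i => ~~ S i) (iota 0 N) = g.

Definition has_multiplicity (S : pred nat) (a : nat) : Prop :=
  [/\ 0 < a, S a & forall k, 0 < k < a -> ~~ S k].

Inductive generated (A : seq nat) : nat -> Prop :=
  | gen0 : generated A 0
  | genS : forall x n, x \in A -> generated A n -> generated A (x + n).

Definition reflective (S : pred nat) (g : nat) : Prop :=
  forall z, z < g -> (S z (+) S (z + g)).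

(* Main.v *)
Require Import Defs.
From mathcomp Require Import all_boot zify.
Set Implicit Arguments. Unset Strict Implicit. Unset Printing Implicit Defensive.

Lemma gen_add A x y : generated A x -> generated A y -> generated A (x + y).
Proof. elim=> [|z n Hz _ IH] Hy; first by rewrite add0n. rewrite -addnA; exact: genS Hz (IH Hy). Qed.

Lemma gen_mem A x : x \in A -> generated A x.
Proof. move=> H; rewrite -[x]addn0; apply: genS H (gen0 _). Qed.

Lemma gen_mul A a k : a \in A -> generated A (a * k).
Proof. move=> H; elim: k => [|k IH]; first by rewrite muln0; exact: gen0.
rewrite mulnS; exact: gen_add (gen_mem H) IH. Qed.

Definition T g a n := ((n < g) && (a %| n)) || ((g <= n < 2 * g) && ~~ (a %| (n - g))) || (2 * g <= n).

Definition AA g a := a :: (2 * g + a - (g - a * (g %/ a))) :: [seq g + i | i <- iota 1 (a - 1)].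

Lemma memA g a i : 1 <= i < a -> g + i \in AA g a.
Proof. move=> H; rewrite /AA !inE; apply/orP; right; apply/orP; right.
apply/mapP; exists i => //; rewrite mem_iota; lia. Qed.

Lemma T_gen g a n : 2 <= a <= g.+1 -> ~~ (a %| g) -> 1 <= g ->
  T g a n -> generated (AA g a) n.
Proof.
move=> Ha Hg g1.
have aA : a \in AA g a by rewrite /AA inE eqxx.
have Hr : g - a * (g %/ a) = g %% a by rewrite {1}(divn_eq g a) mulnC addKn.
have rpos : 0 < g %% a by move: Hg; rewrite /dvdn lt0n.
have rlt : g %% a < a by apply: ltn_pmod; lia.
have Hdiv := divn_eq g a.
have gtop : generated (AA g a) (2*g + a - g %% a).
  by apply: gen_mem; rewrite /AA !inE Hr eqxx orbT.
move: (g %/ a) (g %% a) Hr rpos rlt Hdiv gtop => q r Hr rpos rlt Hdiv gtop.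
have gen2 : forall d, d < a -> generated (AA g a) (2 * g + d).
  move=> d Hd.
  case: d Hd => [|[|d]] Hd.
  - have -> : 2 * g + 0 = (g + r) + a * q by lia.
    by apply: gen_add; [apply: gen_mem; apply: memA; lia | apply: gen_mul].
  - case: (ltnP (r.+1) a) => Hr1.
    + have -> : 2 * g + 1 = (g + r.+1) + a * q by lia.
      by apply: gen_add; [apply: gen_mem; apply: memA; lia | apply: gen_mul].
    + have -> : 2 * g + 1 = 2 * g + a - r by lia.
      exact: gtop.
  - have -> : 2 * g + d.+2 = (g + 1) + (g + d.+1) by lia.
    apply: gen_add; apply: gen_mem; apply: memA; lia.
rewrite /T => /orP [/orP [/andP [H1 H2]|/andP [H1 H2]]|H].
- rewrite -(divnK H2) mulnC; exact: gen_mul.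
- have tpos : 0 < (n - g) %% a by move: H2; rewrite /dvdn lt0n.
  have tlt : (n - g) %% a < a by apply: ltn_pmod; lia.
  have Hd := divn_eq (n - g) a.
  move: ((n - g) %/ a) ((n - g) %% a) tpos tlt Hd => k t tpos tlt Hd.
  have -> : n = (g + t) + a * k by lia.
  by apply: gen_add; [apply: gen_mem; apply: memA; lia | apply: gen_mul].
- have tlt : (n - 2 * g) %% a < a by apply: ltn_pmod; lia.
  have Hd := divn_eq (n - 2 * g) a.
  move: ((n - 2 * g) %/ a) ((n - 2 * g) %% a) tlt Hd => k t tlt Hd.
  have -> : n = (2 * g + t) + a * k by lia.
  apply: gen_add; [exact: gen2 | exact: gen_mul].
Qed.

Lemma gen_T g a n : 2 <= a <= g.+1 -> ~~ (a %| g) -> 1 <= g ->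
  generated (AA g a) n -> T g a n.
Proof.
move=> Ha Hg g1; elim=> [|x m Hx _ IH].
  by rewrite /T dvdn0 g1.
have Hr : 2 * g + a - (g - a * (g %/ a)) >= 2 * g.
  have := divn_eq g a; have := ltn_pmod g (_ : 0 < a); lia.
move: Hx; rewrite /AA !inE => /orP [/eqP ->|/orP [/eqP ->|/mapP [i Hi ->]]].
- move: IH; rewrite /T => /orP [/orP [/andP [H1 H2]|/andP [H1 H2]]|H].
  + case: (ltnP (a + m) g) => H3; first by rewrite /= dvdn_addr ?dvdnn ?H2.
    case: (ltnP (a + m) (2 * g)) => H4; last by rewrite !orbT.
    rewrite /= dvdn_subr //; last by rewrite dvdn_addr ?dvdnn.
    by rewrite Hg.
  + have -> : a + m - g = a + (m - g) by lia.
    rewrite !(dvdn_addr _ (dvdnn a)) H2.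
    case: (ltnP (a + m) (2 * g)) => H4; last by rewrite !orbT.
    have -> : g <= a + m by lia. by rewrite /= orbT.
  + apply/orP; right; lia.
- apply/orP; right; lia.
- move: Hi; rewrite mem_iota => Hi.
  move: IH; rewrite /T => /orP [/orP [/andP [H1 H2]|/andP [H1 H2]]|H].
  + case: (ltnP (g + i + m) (2 * g)) => H4; last by rewrite !orbT.
    have -> : g + i + m - g = i + m by lia.
    have Hd : (a %| i + m) = false by rewrite (dvdn_addl _ H2); apply: gtnNdvd; lia.
    rewrite Hd.
    have -> : g <= g + i + m by lia.
    by rewrite /= orbT.
  + apply/orP; right; lia.
  + apply/orP; right; lia.
Qed.

Theorem mainTheorem1 (S : pred nat) (g a : nat) :
  numerical_semigroup S -> has_genus S g -> 1 <= g -> has_multiplicity S a ->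
  let q := g %/ a in
  let r := g - a * q in
  reflective S g <->
  [/\ 2 <= a <= g.+1, ~~ (a %| g) &
      forall n, S n <->
        generated (a :: (2 * g + a - r) :: [seq g + i | i <- iota 1 (a - 1)]) n].
Proof.
move=> [S0 Sadd _] [N [HN Hcnt]] g1 [apos Sa Sbelow] q r.
have Smul : forall x k, S x -> S (x * k).
  move=> x k Hx; elim: k => [|k IH]; first by rewrite muln0.
  by rewrite mulnS; apply: Sadd.
split; last first.
  move=> [Ha Hg HS] z Hz.
  have E : forall n, S n = T g a n.
    move=> n; apply/idP/idP => H.
      by apply: (gen_T Ha Hg g1); apply/HS.
    by apply/HS; apply: (T_gen Ha Hg g1).
  rewrite !E /T Hz /=.
  have -> : z + g - g = z by lia.
  have -> : z + g < g = false by lia.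
  have -> : g <= z + g by lia.
  have -> : z + g < 2 * g by lia.
  have -> : 2 * g <= z = false by lia.
  have -> : 2 * g <= z + g = false by lia.
  have -> : g <= z = false by lia.
  by rewrite /= orbF; case: (a %| z).
move=> Hrefl.
have Sg : ~~ S g by move: (Hrefl 0 g1); rewrite add0n S0.
have a2 : 2 <= a.
  rewrite ltnNge; apply/negP => H; have a1 : a = 1 by lia.
  by move: Sg; rewrite -(mul1n g) Smul // -a1.
have ag : ~~ (a %| g).
  apply/negP => H; move: Sg; rewrite -(divnK H) mulnC Smul //.
have cnt : forall m, m <= g -> count (fun i => ~~ S i) (iota 0 m) + count (fun i => ~~ S i) (iota g m) = m.
  elim=> [|m IH] Hm //.
  rewrite -addn1 !iotaD !count_cat /= !addn0.
  have : (~~ S m : nat) + ~~ S (g + m) = 1.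
    move: (Hrefl m Hm); rewrite addnC; by case: (S m); case: (S (g + m)).
  have := IH (ltnW Hm); rewrite add0n; lia.
have c2 : count (fun i => ~~ S i) (iota 0 (2 * g)) = g.
  by rewrite mul2n -addnn iotaD count_cat add0n cnt.
have big : forall n, 2 * g <= n -> S n.
  move=> n Hn; apply/negPn/negP => Hs.
  case: (leqP N n) => HNn; first by move: Hs; rewrite HN.
  have HN2 : N = 2 * g + (N - 2 * g) by lia.
  move: Hcnt; rewrite HN2 iotaD count_cat c2.
  have : has (fun i => ~~ S i) (iota (0 + 2 * g) (N - 2 * g)).
    apply/hasP; exists n => //; rewrite mem_iota; lia.
  rewrite has_count; lia.
have ag1 : a <= g.+1.
  rewrite leqNgt; apply/negP => H.
  case: (ltnP 1 g) => g2.
    move: (Hrefl 1 g2); rewrite (negbTE (Sbelow 1 _)) ?(negbTE (Sbelow (1 + g) _)) //; lia.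
  by move: (big 2 ltac:(lia)); rewrite (negbTE (Sbelow 2 _)) //; lia.
have low : forall n, n < g -> S n = (a %| n).
  move=> n Hn; apply/idP/idP => H; last by rewrite -(divnK H) mulnC Smul.
  elim: n {-2}n (leqnn n) Hn H => [|k IH] n Hnk Hn H.
    by have -> : n = 0 by lia.
  case: (ltnP n a) => Hna.
    case: n Hnk Hn H Hna => [|n] // _ _ H Hna.
    by move: H; rewrite (negbTE (Sbelow n.+1 _)) //; lia.
  have Sna : S (n - a).
    apply/negPn/negP => Hs.
    have := Hrefl (n - a) ltac:(lia); rewrite (negbTE Hs) /= => H2.
    have := Sadd _ _ H2 Sa; have -> : n - a + g + a = n + g by lia.
    move=> H3; move: (Hrefl n Hn); by rewrite H H3.
  have := IH (n - a) ltac:(lia) ltac:(lia) Sna.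
  have -> : n = (n - a) + a by lia.
  rewrite addnK => Hd; by rewrite dvdn_add // dvdnn.
have ST : forall n, S n = T g a n.
  move=> n; rewrite /T; case: (ltnP n g) => H1.
    rewrite low //=.
    have -> : 2 * g <= n = false by lia.
    by rewrite !orbF.
  case: (ltnP n (2 * g)) => H2; last by rewrite big // orbT.
  rewrite /=.
  have := Hrefl (n - g) ltac:(lia); have -> : n - g + g = n by lia.
  rewrite low; last by lia.
  by case: (S n); case: (a %| n - g).
split => //; first by rewrite a2.
move=> n; rewrite ST; split => H.
  by apply: (T_gen (n := n) (_ : 2 <= a <= g.+1) ag g1 H); rewrite a2.
by apply: (gen_T (_ : 2 <= a <= g.+1) ag g1 H); rewrite a2.
Qed.
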